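(* In an execution of Algorithm A2 (described in the context) with $n>3t$ and a strong $(t+1)$ common coin, suppose some non-faulty process decides $v\in\{0,1\}$ in round $r$. Then at every non-faulty process: (i) in every round $\rho\ge r$, the flag $\mathit{ptr}[v]$ (eventually) equals $\mathit{true}$, and no non-faulty process decides $\neg v$; (ii) in every round $\rho>r$, the flag $\mathit{ptr}[\neg v]$ is $\mathit{false}$ (never becomes true).
   Context: System model: $n$ asynchronous sequential processes $p_1,\dots,p_n$, of which at most $t$ are Byzantine (behave arbitrarily, may collude); the others are non-faulty. Processes communicate over reliable asynchronous point-to-point channels between every pair: messages between non-faulty processes are eventually delivered, unaltered, not duplicated, and the receiver knows the identity of the sender; there is no bound on delays and the adversary controls delivery order. ''Broadcast $m$'' means sending $m$ to every process (including oneself). When counting messages ''received from $k$ distinct processes'', at most one message per sender is counted. S-Broadcast with tag $T$, value $v$ and Boolean $\mathit{sb}_i$ at process $p_i$: set the Boolean flag $\mathit{sval}_i\leftarrow\mathit{false}$; if $\mathit{sb}_i=\mathit{true}$, broadcast $\mathrm{SVAL}(T,v)$; return a reference to $\mathit{sval}_i$ (which may later become true). In the background (only for messages carrying this same value $v$): when $\mathrm{SVAL}(T,v)$ has been received from $t+1$ distinct processes and $p_i$ has not yet broadcast $\mathrm{SVAL}(T,v)$, $p_i$ broadcasts $\mathrm{SVAL}(T,v)$; when $\mathrm{SVAL}(T,v)$ has been received from $2t+1$ distinct processes, $p_i$ sets $\mathit{sval}_i\leftarrow\mathit{true}$. Instances with different (tag, value) pairs are independent. Strong $(t+1)$ common coin: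 for each round $r$, a call $\mathsf{random}()$ in round $r$ returns the same uniformly random bit to every non-faulty caller; this bit is unpredictable and is not revealed to anyone before at least $t+1$ non-faulty processes have called $\mathsf{random}()$ in round $r$. Algorithm A2 (binary consensus), at non-faulty $p_i$ proposing $v_i\in\{0,1\}$, with a two-entry array $\mathit{ptr}[0],\mathit{ptr}[1]$ of references to Boolean flags: set $s\leftarrow\neg v_i$, $r\leftarrow0$, $\mathit{support}\leftarrow\mathit{false}$; $\mathit{ptr}[s]\leftarrow$ S-Broadcast with tag $\mathrm{EST}[1]$, value $s$, Boolean $\mathit{false}$. Repeat forever: (1) $r\leftarrow r+1$. (2) $\mathit{ptr}[\neg s]\leftarrow$ S-Broadcast with tag $\mathrm{EST}[r]$, value $\neg s$, Boolean $\neg\mathit{support}$ (the entry $\mathit{ptr}[s]$ is left unchanged, still referring to an earlier instance). (3) Wait until $\mathit{ptr}[0]=\mathit{true}$ or $\mathit{ptr}[1]=\mathit{true}$. (4) If $\mathit{support}=\mathit{true}$ then $w\leftarrow s$; else if $\mathit{ptr}[0]=\mathit{true}$ then $w\leftarrow0$; else ($\mathit{ptr}[1]=\mathit{true}$) $w\leftarrow1$. (5) Broadcast $\mathrm{AUX}(r,w)$. (6) Wait until there are $n-t$ distinct processes $p_j$ from which a message $\mathrm{AUX}(r,w_j)$ has been received with $\mathit{ptr}[w_j]=\mathit{true}$; let $\mathit{view}$ be the set of these values $w_j$. (7) $s\leftarrow\mathsf{random}()$. (8) If $\mathit{view}=\{s\}$: $\mathit{support}\leftarrow\mathit{true}$ and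 decide $s$ if not yet decided; else if $\mathit{view}=\{0,1\}$: $\mathit{support}\leftarrow\mathit{true}$; else $\mathit{support}\leftarrow\mathit{false}$. ($\neg$ denotes bit negation.) *)

(* Defs.v *)
From HB Require Import structures.
From mathcomp Require Import all_boot.
Set Implicit Arguments. Unset Strict Implicit. Unset Printing Implicit Defensive.

(* PInit    : before the initialisation part of A2.
   PStart   : about to execute steps (1)-(2) of the next round
              (rnd = last completed round).
   PWaitEst : steps (3)-(5) of round rnd (after step (2)).
   PWaitAux : steps (6)-(8) of round rnd. *)
Inductive PC := PInit | PStart | PWaitEst | PWaitAux.

(* Messages: SVAL(EST[k], x) and AUX(k, w). *)
Inductive Msg := SVAL of nat & bool | AUX of nat & bool.

(* An S-Broadcast instance is identified by its tag
   EST[k] (the number k) and its value x.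
   ptr x      : Some k iff ptr[x] refers to the flag sval of instance (EST[k], x)
   invoked k x: instance (EST[k], x) has been invoked
   sflag k x  : the Boolean flag sval of instance (EST[k], x)
   sv_sent k x: the process has broadcast SVAL(EST[k], x)
   aux_sent k w: the process has broadcast AUX(k, w)
   rcv_sval k x / rcv_aux k w : set of senders from which SVAL(EST[k],x) /
                                AUX(k,w) has been received
   dec        : Some (v, r) iff the process decided v in round r *)
Record lstate (n : nat) := LState {
  pc : PC; rnd : nat; est : bool; sup : bool;
  ptr : bool -> option nat;
  invoked : nat -> bool -> bool;
  sflag : nat -> bool -> bool;
  sv_sent : nat -> bool -> bool;
  aux_sent : nat -> bool -> bool;
  rcv_sval : nat -> bool -> {set 'I_n};
  rcv_aux : nat -> bool -> {set 'I_n};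
  dec : option (bool * nat) }.

Definition upd1 {A : Type} (f : bool -> A) (x : bool) (a : A) : bool -> A :=
  fun x' => if x' == x then a else f x'.
Definition upd2 {A : Type} (f : nat -> bool -> A) (k : nat) (x : bool) (a : A)
  : nat -> bool -> A :=
  fun k' x' => if (k' == k) && (x' == x) then a else f k' x'.

Section Model.
Variables (n t : nat).
Implicit Types (ls : lstate n).

(* Background part of all invoked S-Broadcast instances: echo on t+1
   receptions, set the flag on 2t+1 receptions (messages received before the
   invocation are taken into account). *)
Definition close ls : lstate n :=
  LState (pc ls) (rnd ls) (est ls) (sup ls) (ptr ls) (invoked ls)
    (fun k x => sflag ls k x || invoked ls k x && (2 * t + 1 <= #|rcv_sval ls k x|))
    (fun k x => sv_sent ls k x || invoked ls k x && (t + 1 <= #|rcv_sval ls k x|))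
    (aux_sent ls) (rcv_sval ls) (rcv_aux ls) (dec ls).

(* S-Broadcast with tag EST[k], value x, Boolean b. *)
Definition invoke ls (k : nat) (x b : bool) : lstate n :=
  close (LState (pc ls) (rnd ls) (est ls) (sup ls) (ptr ls)
    (upd2 (invoked ls) k x true)
    (upd2 (sflag ls) k x false)
    (upd2 (sv_sent ls) k x (sv_sent ls k x || b))
    (aux_sent ls) (rcv_sval ls) (rcv_aux ls) (dec ls)).

Definition receive ls (j : 'I_n) (m : Msg) : lstate n :=
  close (match m with
  | SVAL k x => LState (pc ls) (rnd ls) (est ls) (sup ls) (ptr ls) (invoked ls)
      (sflag ls) (sv_sent ls) (aux_sent ls)
      (upd2 (rcv_sval ls) k x (j |: rcv_sval ls k x)) (rcv_aux ls) (dec ls)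
  | AUX k w => LState (pc ls) (rnd ls) (est ls) (sup ls) (ptr ls) (invoked ls)
      (sflag ls) (sv_sent ls) (aux_sent ls)
      (rcv_sval ls) (upd2 (rcv_aux ls) k w (j |: rcv_aux ls k w)) (dec ls)
  end).

Definition ptrflag ls (x : bool) : bool :=
  if ptr ls x is Some k then sflag ls k x else false.

(* One atomic local step of the algorithm text at a non-faulty process with
   proposal vi; coin r is the bit returned by random() in round r. *)
Definition lstep (coin : nat -> bool) (vi : bool) ls (ls' : lstate n) : Prop :=
  match pc ls with
  | PInit =>
      let s := ~~ vi in
      ls' = invoke (LState PStart 0 s false (upd1 (ptr ls) s (Some 1))
                     (invoked ls) (sflag ls) (sv_sent ls) (aux_sent ls)
                     (rcv_sval ls) (rcv_aux ls) (dec ls)) 1 s false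
  | PStart =>
      let r := (rnd ls).+1 in
      let s := est ls in
      ls' = invoke (LState PWaitEst r s (sup ls) (upd1 (ptr ls) (~~ s) (Some r))
                     (invoked ls) (sflag ls) (sv_sent ls) (aux_sent ls)
                     (rcv_sval ls) (rcv_aux ls) (dec ls)) r (~~ s) (~~ sup ls)
  | PWaitEst =>
      (ptrflag ls false || ptrflag ls true) /\
      let w := if sup ls then est ls
               else if ptrflag ls false then false else true in
      ls' = close (LState PWaitAux (rnd ls) (est ls) (sup ls) (ptr ls)
                     (invoked ls) (sflag ls) (sv_sent ls)
                     (upd2 (aux_sent ls) (rnd ls) w true)
                     (rcv_sval ls) (rcv_aux ls) (dec ls))
  | PWaitAux =>
      exists (S : {set 'I_n}) (wj : 'I_n -> bool),
        #|S| = n - t /\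
        (forall j, j \in S -> j \in rcv_aux ls (rnd ls) (wj j) /\ ptrflag ls (wj j)) /\
        let inview b := [exists j in S, wj j == b] in
        let s := coin (rnd ls) in
        let '(sup', dec') :=
          if inview s && ~~ inview (~~ s) then
            (true, if dec ls is None then Some (s, rnd ls) else dec ls)
          else if inview false && inview true then (true, dec ls)
          else (false, dec ls) in
        ls' = LState PStart (rnd ls) s sup' (ptr ls) (invoked ls) (sflag ls)
                (sv_sent ls) (aux_sent ls) (rcv_sval ls) (rcv_aux ls) dec'
  end.

Definition sent ls (m : Msg) : bool :=
  match m with SVAL k x => sv_sent ls k x | AUX k w => aux_sent ls k w end.
Definition rcvd ls (j : 'I_n) (m : Msg) : bool :=
  match m with SVAL k x => j \in rcv_sval ls k x | AUX k w => j \in rcv_aux ls k w end.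

Definition gstate := 'I_n -> lstate n.

Inductive label := Local of 'I_n | Deliver of 'I_n & 'I_n & Msg
                 | Byz of 'I_n & 'I_n & Msg | Idle.

Definition gupd (g : gstate) (i : 'I_n) (ls : lstate n) : gstate :=
  fun j => if j == i then ls else g j.

(* F is the set of Byzantine processes: they can send any
   message to anybody at any time (Byz); messages broadcast by non-faulty
   processes are delivered (Deliver) in any order. *)
Definition gstep (F : {set 'I_n}) (prop : 'I_n -> bool) (coin : nat -> bool)
  (g : gstate) (l : label) (g' : gstate) : Prop :=
  match l with
  | Local i => i \notin F /\ lstep coin (prop i) (g i) (g' i) /\
               (forall j, j != i -> g' j = g j)
  | Deliver j i m => j \notin F /\ i \notin F /\ sent (g j) m /\
               g' = gupd g i (receive (g i) j m)
  | Byz j i m => j \in F /\ i \notin F /\ g' = gupd g i (receive (g i) j m)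
  | Idle => g' = g
  end.

Definition init_ls : lstate n :=
  LState PInit 0 false false (fun _ => None) (fun _ _ => false) (fun _ _ => false)
    (fun _ _ => false) (fun _ _ => false) (fun _ _ => set0) (fun _ _ => set0) None.

Definition execution (F : {set 'I_n}) (prop : 'I_n -> bool) (coin : nat -> bool) (sigma : nat -> gstate) (lab : nat -> label) : Prop :=
  (forall i, sigma 0 i = init_ls) /\
  (forall k, gstep F prop coin (sigma k) (lab k) (sigma k.+1)).

(* Fairness: reliable channels between non-faulty processes, and every
   non-faulty process that is continuously enabled eventually takes a step. *)
Definition fair (F : {set 'I_n}) (prop : 'I_n -> bool) (coin : nat -> bool) (sigma : nat -> gstate) (lab : nat -> label) : Prop :=
  (forall k (j i : 'I_n) m, j \notin F -> i \notin F -> sent (sigma k j) m ->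
     exists k', rcvd (sigma k' i) j m) /\
  (forall (i : 'I_n) k, i \notin F ->
     (forall k', k <= k' -> exists g', gstep F prop coin (sigma k') (Local i) g') ->
     exists k', k <= k' /\ lab k' = Local i).

(* Process is in round rho (after step (2) of round rho and before step (1)
   of round rho+1). *)
Definition in_round ls (rho : nat) : Prop := pc ls <> PInit /\ rnd ls = rho.

End Model.

(* Main.v *)
Require Import Defs.
From HB Require Import structures.
From mathcomp Require Import all_boot.
From mathcomp Require Import zify.
From Stdlib Require Import Classical.
Set Implicit Arguments. Unset Strict Implicit. Unset Printing Implicit Defensive.

Section Local.
Variables (n t : nat) (coin : nat -> bool).
Hypothesis Htn : t < n.

Fixpoint P (rho : nat) (x : bool) : nat :=
  match rho with 0 => 1 | rho'.+1 => if (0 < rho') && (x == ~~ coin rho') then rho'.+1 else P rho' x end.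

Definition stage (ls : lstate n) : nat :=
  match pc ls with PInit => 0 | PStart => 3 * rnd ls + 1
  | PWaitEst => 3 * rnd ls - 1 | PWaitAux => 3 * rnd ls end.

Lemma lstep_aux (vi : bool) (ls ls' : lstate n) : pc ls = PWaitAux -> lstep t coin vi ls ls' ->
  exists (S : {set 'I_n}) (wj : 'I_n -> bool),
   #|S| = n - t /\
   (forall j, j \in S -> j \in rcv_aux ls (rnd ls) (wj j) /\ ptrflag ls (wj j)) /\
   let s := coin (rnd ls) in
   let c1 := [exists j in S, wj j == s] && ~~ [exists j in S, wj j == ~~ s] in
   let c2 := [exists j in S, wj j == false] && [exists j in S, wj j == true] in
   ls' = LState PStart (rnd ls) s (c1 || c2) (ptr ls) (invoked ls) (sflag ls)
                (sv_sent ls) (aux_sent ls) (rcv_sval ls) (rcv_aux ls)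
                (if c1 then (if dec ls is None then Some (s, rnd ls) else dec ls) else dec ls).
Proof.
rewrite /lstep => ->; case=> S [wj [H1 [H2 H3]]]; exists S, wj; split=> //; split=> //.
move: H3 => /=.
by case: ifP => c1 /=; [| case: ifP => c2 /=].
Qed.

Lemma lstep_aux_ex (vi : bool) (ls : lstate n) (S : {set 'I_n}) (wj : 'I_n -> bool) :
  pc ls = PWaitAux -> #|S| = n - t ->
  (forall j, j \in S -> j \in rcv_aux ls (rnd ls) (wj j) /\ ptrflag ls (wj j)) ->
  exists ls', lstep t coin vi ls ls'.
Proof.
move=> Hpc H1 H2.
pose s := coin (rnd ls).
pose c1 := [exists j in S, wj j == s] && ~~ [exists j in S, wj j == ~~ s].
pose c2 := [exists j in S, wj j == false] && [exists j in S, wj j == true].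
exists (LState PStart (rnd ls) s (c1 || c2) (ptr ls) (invoked ls) (sflag ls)
                (sv_sent ls) (aux_sent ls) (rcv_sval ls) (rcv_aux ls)
                (if c1 then (if dec ls is None then Some (s, rnd ls) else dec ls) else dec ls)).
rewrite /lstep Hpc; exists S, wj; split=> //; split=> //=.
rewrite /c1 /c2 /s.
by case: ifP => e1 /=; [| case: ifP => e2 /=].
Qed.

Record LI (vi : bool) (ls : lstate n) : Prop := {
 l2 : pc ls <> PInit -> 0 < rnd ls -> forall x, ptr ls x = Some (P (rnd ls) x);
 l3 : pc ls = PWaitEst \/ pc ls = PWaitAux -> 0 < rnd ls;
 l4 : pc ls = PStart -> 0 < rnd ls -> est ls = coin (rnd ls);
 l5 : forall k x, sflag ls k x = invoked ls k x && (2*t+1 <= #|rcv_sval ls k x|);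
 l6 : forall k x, invoked ls k x -> t+1 <= #|rcv_sval ls k x| -> sv_sent ls k x;
 l7 : forall r' x, 0 < r' -> 3*r' - 1 <= stage ls -> invoked ls (P r' x) x;
 l7' : pc ls = PStart -> rnd ls = 0 ->
       [/\ invoked ls 1 (est ls), ptr ls (est ls) = Some 1, est ls = ~~ vi & sup ls = false];
 l8 : forall r' w, aux_sent ls r' w -> [/\ 0 < r', 3*r' <= stage ls & sflag ls (P r' w) w];
 l8u : forall r', ~~ (aux_sent ls r' false && aux_sent ls r' true);
 l9 : sup ls -> [/\ pc ls <> PInit, 0 < rnd ls & sflag ls (P (rnd ls) (est ls)) (est ls)];
 l10 : pc ls = PStart -> 0 < rnd ls -> sup ls = false ->
       (exists S : {set 'I_n}, #|S| = n - t /\ S \subset rcv_aux ls (rnd ls) (~~ coin (rnd ls)))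
       /\ sflag ls (P (rnd ls) (~~ coin (rnd ls))) (~~ coin (rnd ls));
 l11 : forall x r', dec ls = Some (x, r') ->
       [/\ x = coin r', 0 < r' & exists S : {set 'I_n}, #|S| = n - t /\ S \subset rcv_aux ls r' x];
 l12 : forall r', 0 < r' -> 3*r'+2 <= stage ls ->
       sv_sent ls r'.+1 (~~ coin r') || sflag ls (P r' (coin r')) (coin r');
 l13 : 2 <= stage ls -> sv_sent ls 1 vi;
 l14 : forall r', 0 < r' -> 3*r' <= stage ls -> aux_sent ls r' false || aux_sent ls r' true }.

Lemma LI_init vi : LI vi (init_ls n).
Proof.
constructor=> //=; rewrite /stage /=.
- by case.
- by move=> r' x; lia.
- by move=> r'; lia.
- by move=> r'; lia.
Qed.

Lemma close_LI vi ls pc0 rnd0 est0 sup0 ptr0 inv0 sf0 sv0 aux0 (rs0 ra0 : nat -> bool -> {set 'I_n}) dec0 :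
  LI vi ls -> pc0 = pc ls -> rnd0 = rnd ls -> est0 = est ls -> sup0 = sup ls ->
  ptr0 = ptr ls -> inv0 = invoked ls -> sf0 = sflag ls -> sv0 = sv_sent ls ->
  aux0 = aux_sent ls -> dec0 = dec ls ->
  (forall k x, rcv_sval ls k x \subset rs0 k x) -> (forall k x, rcv_aux ls k x \subset ra0 k x) ->
  LI vi (close t (LState pc0 rnd0 est0 sup0 ptr0 inv0 sf0 sv0 aux0 rs0 ra0 dec0)).
Proof.
move=> [h2 h3 h4 h5 h6 h7 h7' h8 h8u h9 h10 h11 h12 h13 h14] -> -> -> -> -> -> -> -> -> -> Hs Ha.
have sfm : forall k x, sflag ls k x -> sflag ls k x || invoked ls k x && (2*t+1 <= #|rs0 k x|).
  by move=> k x ->.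
have svm : forall k x, sv_sent ls k x -> sv_sent ls k x || invoked ls k x && (t+1 <= #|rs0 k x|).
  by move=> k x ->.
have st : stage (close t (LState (pc ls) (rnd ls) (est ls) (sup ls) (ptr ls) (invoked ls)
   (sflag ls) (sv_sent ls) (aux_sent ls) rs0 ra0 (dec ls))) = stage ls by [].
constructor; rewrite ?st //=.
- move=> k x; rewrite h5; case: (invoked ls k x) => //=.
  case: (leqP (2*t+1) #|rcv_sval ls k x|) => //= H.
  by rewrite (leq_trans H (subset_leq_card (Hs k x))).
- move=> k x Hi Hc; by rewrite Hi Hc orbT.
- move=> r' w /h8 [a b c]; split=> //; exact: sfm.
- move=> /h9 [a b c]; split=> //; exact: sfm.
- move=> a b c; have [[S [S1 S2]] S3] := h10 a b c; split; last exact: sfm.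
  by exists S; split=> //; apply: subset_trans S2 _.
- move=> x r' /h11 [a b [S [S1 S2]]]; split=> //.
  by exists S; split=> //; apply: subset_trans S2 _.
- move=> r' a b; case/orP: (h12 r' a b) => [/svm -> //| /sfm ->]; by rewrite orbT.
- by move=> /h13 /svm.
Qed.

Lemma LI_receive vi ls j m : LI vi ls -> LI vi (receive t ls j m).
Proof.
move=> H; case: m => k x; apply: (close_LI (ls:=ls) H) => //= k' x'; rewrite /upd2;
  case: ifP => [/andP[/eqP-> /eqP->]|_]; by [apply: subsetUr | apply: subxx].
Qed.

Lemma upd2_true (f : nat -> bool -> bool) k0 x0 k x : f k x -> upd2 f k0 x0 true k x.
Proof. by rewrite /upd2; case: ifP. Qed.

Lemma upd2_eq (A : Type) (f : nat -> bool -> A) k0 x0 a : upd2 f k0 x0 a k0 x0 = a.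
Proof. by rewrite /upd2 !eqxx. Qed.

Lemma inv_sf (sf inv c : nat -> bool -> bool) k0 x0 :
  (forall k x, sf k x = inv k x && c k x) ->
  forall k x, upd2 sf k0 x0 false k x || upd2 inv k0 x0 true k x && c k x =
              upd2 inv k0 x0 true k x && c k x.
Proof. by move=> H k x; rewrite /upd2; case: ifP => //= _; rewrite H; case: (inv k x && c k x). Qed.

Lemma inv_sf_mono (sf inv c : nat -> bool -> bool) k0 x0 k x :
  (forall k x, sf k x = inv k x && c k x) -> sf k x ->
  upd2 sf k0 x0 false k x || upd2 inv k0 x0 true k x && c k x.
Proof. by move=> H; rewrite inv_sf // H => /andP[a b]; rewrite b (upd2_true _ _ a). Qed.

Lemma inv_sv_mono (sv : nat -> bool -> bool) k0 x0 b k x (c : bool) :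
  sv k x -> upd2 sv k0 x0 (sv k0 x0 || b) k x || c.
Proof. by rewrite /upd2; case: ifP => [/andP[/eqP-> /eqP->] ->|_ ->]. Qed.

Lemma LI_PInit vi ls ls' : LI vi ls -> pc ls = PInit -> lstep t coin vi ls ls' -> LI vi ls'.
Proof.
move=> [h2 h3 h4 h5 h6 h7 h7' h8 h8u h9 h10 h11 h12 h13 h14] Hpc.
have Haux : forall r' w, aux_sent ls r' w = false.
  move=> r' w; apply/negP => /h8 [a b _]; move: b; rewrite /stage Hpc; lia.
rewrite /lstep Hpc => ->.
constructor; rewrite /stage /=.
all: try (move=> *; lia).
- by case.
- exact: (inv_sf (c := fun k x => 2*t+1 <= #|rcv_sval ls k x|) _ _ h5).
- by rewrite /upd1 !upd2_eq eqxx.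
- by move=> r' w; rewrite Haux.
- done.
- exact: h11.
Qed.

Lemma LI_PStart vi ls ls' : LI vi ls -> pc ls = PStart -> lstep t coin vi ls ls' -> LI vi ls'.
Proof.
move=> [h2 h3 h4 h5 h6 h7 h7' h8 h8u h9 h10 h11 h12 h13 h14] Hpc.
have sfm : forall k0 x0 k x, sflag ls k x -> upd2 (sflag ls) k0 x0 false k x ||
    upd2 (invoked ls) k0 x0 true k x && (2*t+1 <= #|rcv_sval ls k x|).
  by move=> k0 x0 k x; apply: (inv_sf_mono (c := fun k x => 2*t+1 <= #|rcv_sval ls k x|)).
rewrite /lstep Hpc => ->.
have Hst : stage ls = 3 * rnd ls + 1 by rewrite /stage Hpc.
have Hes : 0 < rnd ls -> est ls = coin (rnd ls) by apply: h4.
have Hnew : forall x, upd2 (invoked ls) (rnd ls).+1 (~~ est ls) true (P (rnd ls).+1 x) x.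
  move=> x; case: (posnP (rnd ls)) => Hr /=.
  - have [a b c d] := h7' Hpc Hr; rewrite Hr /=.
    case: (x =P ~~ est ls) => [->|/eqP Hx]; first by rewrite -Hr upd2_eq.
    have -> : x = est ls by move: Hx; case: x; case: (est ls).
    exact: upd2_true.
  - rewrite Hr /=; rewrite (Hes Hr).
    case: (x =P ~~ coin (rnd ls)) => [->|/eqP Hx]; first by rewrite upd2_eq.
    apply: upd2_true; apply: h7 => //; rewrite Hst; lia.
constructor; rewrite /stage /=.
all: try (move=> *; lia).
- move=> _ _ x; rewrite /upd1; case: (posnP (rnd ls)) => Hr.
  + have [a b c d] := h7' Hpc Hr; rewrite Hr /=.
    case: eqP => [_ //|/eqP Hx].
    have -> : x = est ls by move: Hx; case: x; case: (est ls).
    done.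
  + rewrite /= (Hes Hr); case: eqP => [_ //|/eqP Hx].
    have -> : x = coin (rnd ls) by move: Hx; case: x; case: (coin (rnd ls)).
    by rewrite h2 ?Hpc // eq_sym; case: (coin _).
- by [].
- exact: (inv_sf (c := fun k x => 2*t+1 <= #|rcv_sval ls k x|) _ _ h5).
- move=> r' x H0 H1; case: (leqP r' (rnd ls)) => H2.
  + apply: upd2_true; apply: h7 => //; rewrite Hst; lia.
  + have -> : r' = (rnd ls).+1 by lia.
    exact: Hnew.
- move=> r' w /h8 [a b c]; split=> //; [lia| exact: sfm].
- exact: h8u.
- move=> Hs; have [_ a b] := h9 Hs; split=> //.
  rewrite a /= (Hes a).
  have -> : (coin (rnd ls) == ~~ coin (rnd ls)) = false by case: (coin _).
  rewrite -(Hes a); exact: sfm.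
- by [].
- exact: h11.
- move=> r' H0 H1; case: (ltnP r' (rnd ls)) => H2.
  + have := h12 r' H0 ltac:(rewrite Hst; lia); case/orP => [H|H].
    * by apply/orP; left; apply: inv_sv_mono.
    * by apply/orP; right; apply: sfm.
  + have Hr : r' = rnd ls by lia.
    subst r'; rewrite -(Hes H0).
    case Hsup: (sup ls).
    * have [_ _ b] := h9 Hsup.
      by apply/orP; right; apply: sfm.
    * by rewrite upd2_eq orbT.
- move=> H0; case: (posnP (rnd ls)) => Hr.
  + have [a b c d] := h7' Hpc Hr; rewrite Hr c d /= negbK.
    by rewrite upd2_eq orbT.
  + by apply: inv_sv_mono; apply: h13; rewrite Hst; lia.
- by move=> r' H0 H1; apply: h14 => //; rewrite Hst; lia.
Qed.

Lemma LI_PWaitEst vi ls ls' : LI vi ls -> pc ls = PWaitEst -> lstep t coin vi ls ls' -> LI vi ls'.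
Proof.
move=> [h2 h3 h4 h5 h6 h7 h7' h8 h8u h9 h10 h11 h12 h13 h14] Hpc.
have Hr : 0 < rnd ls by apply: h3; left.
have Hst : stage ls = 3 * rnd ls - 1 by rewrite /stage Hpc.
have Esf : forall k x, sflag ls k x || invoked ls k x && (2*t+1 <= #|rcv_sval ls k x|) = sflag ls k x.
  by move=> k x; rewrite h5; case: (_ && _).
have Esv : forall k x, sv_sent ls k x || invoked ls k x && (t+1 <= #|rcv_sval ls k x|) = sv_sent ls k x.
  move=> k x; case E: (invoked ls k x && _) => //; last by rewrite orbF.
  by case/andP: E => a b; rewrite (h6 _ _ a b).
have Hpf : forall x, ptrflag ls x = sflag ls (P (rnd ls) x) x.
  by move=> x; rewrite /ptrflag h2 ?Hpc.
rewrite /lstep Hpc => -[Hfl ->].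
constructor; rewrite /stage /= ?Esf ?Esv.
all: try (move=> *; lia).
- by move=> _ _; apply: h2 => //; rewrite Hpc.
- by [].
- by move=> k x; rewrite Esf; exact: h5.
- by move=> r' x a b; apply: h7 => //; rewrite Hst; lia.
- have Hw : sflag ls (P (rnd ls) (if sup ls then est ls else if ptrflag ls false then false else true))
             (if sup ls then est ls else if ptrflag ls false then false else true).
    case Hs: (sup ls); first by case: (h9 Hs).
    by case Hf: (ptrflag ls false); rewrite -Hpf //; case/orP: Hfl => [|//]; rewrite Hf.
  move=> r' x'; rewrite /upd2; case: ifP => [/andP[/eqP-> /eqP->] _ | _ /h8 [a b c]].
  + by split=> //; rewrite Esf.
  + by split; [done | lia | rewrite Esf].
- have Hold : forall w, aux_sent ls (rnd ls) w = false.
    by move=> w; apply/negP => /h8 [a b _]; move: b; rewrite Hst; lia.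
  move=> r'; rewrite /upd2; case: (r' =P rnd ls) => [->|_] /=; last exact: h8u.
  by rewrite !Hold; case: (if sup ls then _ else _).
- by move=> /h9 [_ a b]; split.
- by [].
- exact: h11.
- by move=> r' a b; rewrite Esv Esf; apply: h12 => //; rewrite Hst; lia.
- move=> r' a b; rewrite /upd2; case: (r' =P rnd ls) => [->|/eqP ne] /=.
  + by case: (sup ls); [case: (est ls) | case: (ptrflag ls false)]; rewrite /= ?orbT.
  + by apply: h14 => //; rewrite Hst; lia.
Qed.

Lemma inview_s (S : {set 'I_n}) (wj : 'I_n -> bool) s :
  ([exists j in S, wj j == s] && ~~[exists j in S, wj j == ~~s]) ||
  ([exists j in S, wj j == false] && [exists j in S, wj j == true]) ->
  [exists j in S, wj j == s].
Proof. by case/orP => [/andP[]//|/andP[a b]]; case: s. Qed.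

Lemma inview_s2 (S : {set 'I_n}) (wj : 'I_n -> bool) s :
  [exists j in S, wj j == s] ->
  ([exists j in S, wj j == s] && ~~[exists j in S, wj j == ~~s]) ||
  ([exists j in S, wj j == false] && [exists j in S, wj j == true]).
Proof.
move=> H; case E: [exists j in S, wj j == ~~ s]; last by rewrite H.
by apply/orP; right; move: H E; case: s => /= -> ->.
Qed.

Lemma not_inview (S : {set 'I_n}) (wj : 'I_n -> bool) s :
  ~~ [exists j in S, wj j == s] -> forall j, j \in S -> wj j = ~~ s.
Proof.
move=> H j Hj; have : ~~ (wj j == s).
  by apply: contra H => e; apply/existsP; exists j; rewrite Hj.
by clear H; case: (wj j); case: s.
Qed.

Lemma LI_PWaitAux vi ls ls' : LI vi ls -> pc ls = PWaitAux -> lstep t coin vi ls ls' -> LI vi ls'.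
Proof.
move=> HL Hpc Hstep; have [S [wj [H1 [H2 H3]]]] := lstep_aux Hpc Hstep.
move: HL => [h2 h3 h4 h5 h6 h7 h7' h8 h8u h9 h10 h11 h12 h13 h14].
have Hr : 0 < rnd ls by apply: h3; right.
have Hst : stage ls = 3 * rnd ls by rewrite /stage Hpc.
have Hpf : forall x, ptrflag ls x = sflag ls (P (rnd ls) x) x.
  by move=> x; rewrite /ptrflag h2 ?Hpc.
have HS0 : 0 < #|S| by rewrite H1; lia.
rewrite {}H3.
set s := coin (rnd ls).
constructor; rewrite /stage /=.
all: try (move=> *; lia).
- by move=> _; apply: h2; rewrite Hpc.
- exact: h5.
- exact: h6.
- by move=> r' x a b; apply: h7 => //; rewrite Hst; lia.
- by move=> r' w /h8 [a b c]; split=> //; lia.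
- exact: h8u.
- move=> /inview_s /existsP [j /andP [Hj /eqP Hw]]; split=> //.
  by rewrite -Hw -Hpf; case: (H2 j Hj).
- move=> _ _ Hf.
  have Hn : ~~ [exists j in S, wj j == s].
    by apply/negP => /(inview_s2 (S := S) (wj := wj)); rewrite Hf.
  have Hall := not_inview Hn; split.
    exists S; split=> //; apply/subsetP => j Hj; rewrite -(Hall j Hj).
    by case: (H2 j Hj).
  case/card_gt0P: HS0 => j Hj; rewrite -(Hall j Hj) -Hpf.
  by case: (H2 j Hj).
- move=> x r'; case: ifP => [/andP[c1 c2]|_]; last by apply: h11.
  case Hd: (dec ls) => [d|]; first by move=> E; apply: h11; rewrite Hd.
  case=> <- <-; split=> //; exists S; split=> //.
  have Hall := not_inview c2; apply/subsetP => j Hj.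
  have := Hall j Hj; rewrite negbK => Hw; rewrite -Hw; by case: (H2 j Hj).
- by move=> r' a b; apply: h12 => //; rewrite Hst; lia.
- by move=> r' a b; apply: h14 => //; rewrite Hst; lia.
Qed.

Lemma LI_lstep vi ls ls' : LI vi ls -> lstep t coin vi ls ls' -> LI vi ls'.
Proof.
move=> H; case Hpc: (pc ls).
- exact: LI_PInit.
- exact: LI_PStart.
- exact: LI_PWaitEst.
- exact: LI_PWaitAux.
Qed.

Lemma stage_lstep vi ls ls' : LI vi ls -> lstep t coin vi ls ls' -> stage ls' = (stage ls).+1.
Proof.
move=> H Hs; case Hpc: (pc ls).
- by move: Hs; rewrite /lstep Hpc => ->; rewrite /stage Hpc.
- by move: Hs; rewrite /lstep Hpc => ->; rewrite /stage Hpc /=; lia.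
- have Hr : 0 < rnd ls by apply: (l3 H); left.
  by move: Hs; rewrite /lstep Hpc => -[_ ->]; rewrite /stage Hpc /=; lia.
- have Hr : 0 < rnd ls by apply: (l3 H); right.
  have [S [wj [_ [_ ->]]]] := lstep_aux Hpc Hs.
  by rewrite /stage Hpc /=; lia.
Qed.

Definition grow (a b : lstate n) : Prop :=
  [/\ forall k x, rcv_sval a k x \subset rcv_sval b k x,
      forall k x, rcv_aux a k x \subset rcv_aux b k x,
      forall k x, invoked a k x -> invoked b k x,
      forall k x, sv_sent a k x -> sv_sent b k x
    & forall k x, aux_sent a k x -> aux_sent b k x] /\
  stage a <= stage b /\ (forall d, dec a = Some d -> dec b = Some d).

Lemma grow_refl a : grow a a.
Proof. by split=> //; split. Qed.

Lemma grow_trans a b c : grow a b -> grow b c -> grow a c.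
Proof.
move=> [[a1 a2 a3 a4 a5] [a6 a7]] [[b1 b2 b3 b4 b5] [b6 b7]]; split; last split.
- split=> k x.
  + exact: subset_trans (a1 k x) (b1 k x).
  + exact: subset_trans (a2 k x) (b2 k x).
  + by move/a3/b3.
  + by move/a4/b4.
  + by move/a5/b5.
- exact: leq_trans a6 b6.
- by move=> d /a7/b7.
Qed.

Lemma grow_receive ls j m : grow ls (receive t ls j m).
Proof.
case: m => k x; (split; last split; [idtac | by rewrite /stage /= | by []]).
- split=> k' x' //=; try (by move=> ->); rewrite /upd2;
   case: ifP => [/andP[/eqP-> /eqP->]|_]; by [apply: subsetUr | apply: subxx].
- split=> k' x' //=; try (by move=> ->); rewrite /upd2;
   case: ifP => [/andP[/eqP-> /eqP->]|_]; by [apply: subsetUr | apply: subxx].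
Qed.

Lemma grow_lstep vi ls ls' : LI vi ls -> lstep t coin vi ls ls' -> grow ls ls'.
Proof.
move=> H Hs; have Hst := stage_lstep H Hs.
split; last (split; first by rewrite Hst).
- case Hpc: (pc ls); move: Hs.
  + rewrite /lstep Hpc => ->; split=> k x //=.
    * exact: upd2_true.
    * by move=> Hv; apply: inv_sv_mono.
  + rewrite /lstep Hpc => ->; split=> k x //=.
    * exact: upd2_true.
    * by move=> Hv; apply: inv_sv_mono.
  + rewrite /lstep Hpc => -[_ ->]; split=> k x //=.
    * by move=> ->.
    * by move=> Ha; rewrite /upd2; case: ifP.
  + move=> Hs; have [S [wj [_ [_ ->]]]] := lstep_aux Hpc Hs; by split.
- case Hpc: (pc ls); move: Hs.
  + by rewrite /lstep Hpc => ->.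
  + by rewrite /lstep Hpc => ->.
  + by rewrite /lstep Hpc => -[_ ->].
  + move=> Hs; have [S [wj [_ [_ ->]]]] := lstep_aux Hpc Hs => d /=.
    by case: ifP => // _ ->.
Qed.

Lemma sflag_grow vi vi' a b k x : LI vi a -> LI vi' b -> grow a b -> sflag a k x -> sflag b k x.
Proof.
move=> Ha Hb [[g1 g2 g3 g4 g5] _]; rewrite (l5 Ha) (l5 Hb) => /andP[i c].
by rewrite (g3 _ _ i) (leq_trans c (subset_leq_card (g1 k x))).
Qed.
End Local.

Section Global.
Variables (n t : nat) (F : {set 'I_n}) (prop : 'I_n -> bool) (coin : nat -> bool)
  (sigma : nat -> gstate n) (lab : nat -> label n).
Hypothesis Hn : 3 * t < n.
Hypothesis HF : #|F| <= t.
Hypothesis Hex : execution t F prop coin sigma lab.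
Hypothesis Hfair : fair t F prop coin sigma lab.

Lemma HtnG : t < n. Proof. lia. Qed.

Lemma step_cases T i : i \notin F ->
  sigma T.+1 i = sigma T i \/
  (lab T = Local i /\ lstep t coin (prop i) (sigma T i) (sigma T.+1 i)) \/
  (exists j m, sigma T.+1 i = receive t (sigma T i) j m /\
               (j \in F \/ (j \notin F /\ sent (sigma T j) m))).
Proof.
move=> Hi; have := (Hex.2 T); case E: (lab T) => [j|j i' m|j i' m|] /=.
- move=> [Hj [Hl Ho]]; case: (j =P i) => [Ej|/eqP ne].
  + by right; left; rewrite -Ej.
  + by left; apply: Ho; rewrite eq_sym.
- move=> [Hj [Hi' [Hs ->]]]; rewrite /gupd; case: (i =P i') => [->|_]; last by left.
  by right; right; exists j, m; split=> //; right.
- move=> [Hj [Hi' ->]]; rewrite /gupd; case: (i =P i') => [->|_]; last by left.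
  by right; right; exists j, m; split=> //; left.
- by move=> ->; left.
Qed.

Lemma G_LI T i : i \notin F -> LI t coin (prop i) (sigma T i).
Proof.
move=> Hi; elim: T => [|T IH]; first by rewrite Hex.1; apply: (LI_init _ HtnG).
case: (step_cases T Hi) => [E|[[_ Hs]|[j [m [E _]]]]].
- by rewrite E.
- exact: (LI_lstep HtnG IH Hs).
- by rewrite E; apply: LI_receive.
Qed.

Lemma G_grow1 T i : i \notin F -> grow (sigma T i) (sigma T.+1 i).
Proof.
move=> Hi; case: (step_cases T Hi) => [->|[[_ Hs]|[j [m [-> _]]]]].
- exact: grow_refl.
- exact: (grow_lstep HtnG (G_LI T Hi) Hs).
- exact: grow_receive.
Qed.

Lemma G_grow T T' i : i \notin F -> T <= T' -> grow (sigma T i) (sigma T' i).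
Proof.
move=> Hi /subnK <-; elim: (T' - T) => [|d IH]; first exact: grow_refl.
by rewrite addSn; apply: grow_trans IH (G_grow1 _ Hi).
Qed.

Lemma lstep_rcv vi (ls ls' : lstate n) : lstep t coin vi ls ls' ->
  rcv_sval ls' = rcv_sval ls /\ rcv_aux ls' = rcv_aux ls.
Proof.
case Hpc: (pc ls) => Hs.
- by move: Hs; rewrite /lstep Hpc => ->.
- by move: Hs; rewrite /lstep Hpc => ->.
- by move: Hs; rewrite /lstep Hpc => -[_ ->].
- by have [S [wj [_ [_ ->]]]] := lstep_aux Hpc Hs.
Qed.

Lemma rcv_step T i j k x : i \notin F -> j \in rcv_sval (sigma T.+1 i) k x ->
  j \in rcv_sval (sigma T i) k x \/ j \in F \/ (j \notin F /\ sv_sent (sigma T j) k x).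
Proof.
move=> Hi; case: (step_cases T Hi) => [->|[[_ Hs]|[j' [m [-> Hj']]]]]; first by move=> Hin; left.
- by rewrite (lstep_rcv Hs).1 => Hin; left.
- case: m Hj' => k' x' Hj' /=; last by move=> Hin; left.
  rewrite /upd2; case: ifP => [/andP[/eqP Ek /eqP Ex]|_]; last by move=> Hin; left.
  rewrite Ek Ex in_setU1 => /orP [/eqP Ej|]; last by move=> Hin; left.
  by rewrite Ej; right.
Qed.

Lemma rcva_step T i j k x : i \notin F -> j \in rcv_aux (sigma T.+1 i) k x ->
  j \in rcv_aux (sigma T i) k x \/ j \in F \/ (j \notin F /\ aux_sent (sigma T j) k x).
Proof.
move=> Hi; case: (step_cases T Hi) => [->|[[_ Hs]|[j' [m [-> Hj']]]]]; first by move=> Hin; left.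
- by rewrite (lstep_rcv Hs).2 => Hin; left.
- case: m Hj' => k' x' Hj' /=; first by move=> Hin; left.
  rewrite /upd2; case: ifP => [/andP[/eqP Ek /eqP Ex]|_]; last by move=> Hin; left.
  rewrite Ek Ex in_setU1 => /orP [/eqP Ej|]; last by move=> Hin; left.
  by rewrite Ej; right.
Qed.

Lemma rcv_inv T i j k x : i \notin F -> j \in rcv_sval (sigma T i) k x ->
  j \in F \/ (j \notin F /\ sv_sent (sigma T j) k x).
Proof.
move=> Hi; elim: T => [|T IH]; first by rewrite Hex.1 /= in_set0.
case/(rcv_step Hi) => [/IH|[HjF|[Hj Hs]]]; [|by left|].
- case=> [HjF|[Hj Hs]]; first by left.
  by right; split=> //; case: (G_grow1 T Hj) => [[_ _ _ g _] _]; apply: g.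
- by right; split=> //; case: (G_grow1 T Hj) => [[_ _ _ g _] _]; apply: g.
Qed.

Lemma rcva_inv T i j k x : i \notin F -> j \in rcv_aux (sigma T i) k x ->
  j \in F \/ (j \notin F /\ aux_sent (sigma T j) k x).
Proof.
move=> Hi; elim: T => [|T IH]; first by rewrite Hex.1 /= in_set0.
case/(rcva_step Hi) => [/IH|[HjF|[Hj Hs]]]; [|by left|].
- case=> [HjF|[Hj Hs]]; first by left.
  by right; split=> //; case: (G_grow1 T Hj) => [[_ _ _ _ g] _]; apply: g.
- by right; split=> //; case: (G_grow1 T Hj) => [[_ _ _ _ g] _]; apply: g.
Qed.

Lemma sv_step T j k x : j \notin F -> sv_sent (sigma T.+1 j) k x ->
  sv_sent (sigma T j) k x \/ t.+1 <= #|rcv_sval (sigma T.+1 j) k x| \/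
  [/\ pc (sigma T j) = PStart, k = (rnd (sigma T j)).+1, x = ~~ est (sigma T j)
     & sup (sigma T j) = false].
Proof.
move=> Hj; case: (step_cases T Hj) => [->|[[_ Hs]|[j' [m [E _]]]]]; first by left.
- have Hs0 := Hs; move: Hs; case Hpc: (pc (sigma T j)); rewrite /lstep Hpc.
  + move=> E; rewrite E /= => /orP [|/andP [_ c]]; last by right; left; rewrite addn1 in c.
    rewrite /upd2; case: ifP => [/andP[/eqP-> /eqP->]|_]; rewrite ?orbF; by left.
  + move=> E; rewrite E /= => /orP [|/andP [_ c]]; last by right; left; rewrite addn1 in c.
    rewrite /upd2; case: ifP => [/andP[/eqP-> /eqP->]|_]; last by left.
    case/orP; first by left.
    by move=> Hsup; right; right; split=> //; apply/negbTE.
  + move=> [_ E]; rewrite E /= => /orP [|/andP [_ c]]; last by right; left; rewrite addn1 in c.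
    by left.
  + move=> _; have [S [wj [_ [_ E]]]] := lstep_aux Hpc Hs0.
    by rewrite E /= => H; left.
- rewrite E; case: m {E} => k' x' /= /orP [|/andP [_ c]]; try (by left);
    by right; left; rewrite addn1 in c.
Qed.

Lemma senders T i k x : i \notin F -> 2*t+1 <= #|rcv_sval (sigma T i) k x| ->
  exists A : {set 'I_n}, t < #|A| /\ forall j, j \in A -> j \notin F /\ sv_sent (sigma T j) k x.
Proof.
move=> Hi Hc; exists (rcv_sval (sigma T i) k x :\: F); split.
- rewrite cardsD; have := subset_leq_card (subsetIr (rcv_sval (sigma T i) k x) F); lia.
- move=> j; rewrite in_setD => /andP [Hj Hr].
  by case: (rcv_inv Hi Hr) => [H|//]; rewrite H in Hj.
Qed.

Lemma no_senders T i k x : i \notin F ->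
  (forall j, j \notin F -> sv_sent (sigma T j) k x = false) ->
  #|rcv_sval (sigma T i) k x| <= t.
Proof.
move=> Hi H; apply: leq_trans HF; apply: subset_leq_card; apply/subsetP => j Hr.
case: (rcv_inv Hi Hr) => [//|[Hj Hs]]; by rewrite H in Hs.
Qed.

Lemma fin_ev (Q : 'I_n -> nat -> Prop) (A : {set 'I_n}) :
  (forall i T T', i \in A -> T <= T' -> Q i T -> Q i T') ->
  (forall i, i \in A -> exists T, Q i T) -> exists T, forall i, i \in A -> Q i T.
Proof.
move=> Hm HA.
suff : forall s : seq 'I_n, {subset s <= A} -> exists T, forall i, i \in s -> Q i T.
  move=> /(_ (enum A)) []; first by move=> i; rewrite mem_enum.
  by move=> T HT; exists T => i Hi; apply: HT; rewrite mem_enum.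
elim=> [|a s IH] Hs; first by exists 0.
have Ha : a \in A by apply: Hs; exact: mem_head.
have [T1 H1] := HA a Ha.
have [T2 H2] : exists T, forall i, i \in s -> Q i T.
  by apply: IH => i Hi; apply: Hs; rewrite in_cons Hi orbT.
exists (maxn T1 T2) => i; rewrite in_cons => /orP [/eqP ->|Hi].
- exact: (Hm a T1 _ Ha (leq_maxl _ _) H1).
- exact: (Hm i T2 _ (Hs i ltac:(by rewrite in_cons Hi orbT)) (leq_maxr _ _) (H2 i Hi)).
Qed.

Lemma card_NF : n - t <= #|~: F|.
Proof. have := cardsC F; rewrite card_ord; lia. Qed.

Lemma inter_nf (S1 S2 : {set 'I_n}) : #|S1| = n - t -> #|S2| = n - t ->
  exists j, [/\ j \in S1, j \in S2 & j \notin F].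
Proof.
move=> H1 H2.
have Hu : #|S1 :|: S2| <= n by have := max_card (S1 :|: S2); rewrite card_ord.
have Hi : 0 < #|(S1 :&: S2) :\: F|.
  rewrite cardsD; have := cardsUI S1 S2; have := subset_leq_card (subsetIr (S1 :&: S2) F); lia.
move: Hi; by case/card_gt0P => j; rewrite !inE => /andP [Hj /andP [a b]]; exists j.
Qed.

Lemma sub_card_ex m (A : {set 'I_n}) : m <= #|A| -> exists B : {set 'I_n}, B \subset A /\ #|B| = m.
Proof.
elim: m => [|m IH] Hm; first by exists (set0 : {set 'I_n}); rewrite cards0 sub0set.
have [B [HB HBc]] := IH (ltnW Hm).
have : 0 < #|A :\: B| by rewrite cardsD (setIidPr HB); lia.
case/card_gt0P => x; rewrite in_setD => /andP [HxB HxA].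
exists (x |: B); split; first by rewrite subUset sub1set HxA HB.
by rewrite cardsU1 HxB HBc.
Qed.

End Global.

Lemma P_le (coin : nat -> bool) rho x : 0 < rho -> P coin rho x <= rho.
Proof.
elim: rho => [//|rho IH] _ /=.
case: ifP => [//|_]; case: (posnP rho) => [->//|/IH]; lia.
Qed.

Lemma P_pos (coin : nat -> bool) rho x : 0 < P coin rho x.
Proof. by elim: rho => [//|rho IH] /=; case: ifP. Qed.

Section Safety.
Variables (n t : nat) (F : {set 'I_n}) (prop : 'I_n -> bool) (coin : nat -> bool)
  (sigma : nat -> gstate n) (lab : nat -> label n).
Hypothesis Hn : 3 * t < n.
Hypothesis HF : #|F| <= t.
Hypothesis Hex : execution t F prop coin sigma lab.
Variables (p : 'I_n) (v : bool) (r k0 : nat).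
Hypothesis Hp : p \notin F.
Hypothesis Hdec : dec (sigma k0 p) = Some (v, r).

Let LIG T i (Hi : i \notin F) := G_LI Hn HF Hex T Hi.

Lemma dec_facts : [/\ v = coin r, 0 < r &
  exists S : {set 'I_n}, #|S| = n - t /\ S \subset rcv_aux (sigma k0 p) r v].
Proof. exact: (l11 (LIG k0 Hp) Hdec). Qed.

Definition bad kk := (r < kk) && (coin kk.-1 == v).

Lemma P_bad rho : r < rho -> bad (P coin rho (~~ v)).
Proof.
have [Hv Hr _] := dec_facts.
elim: rho => [//|rho IH] Hlt /=.
case: (ltngtP r rho) => H.
- case: ifP => [/andP [_ /eqP E]|_]; last exact: IH.
  rewrite /bad /=; apply/andP; split; [lia|].
  by apply/eqP; move: E; case: v; case: (coin rho).
- lia.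
- subst rho; rewrite Hr /= -Hv eqxx /bad /= ltnSn /=.
  by rewrite Hv.
Qed.

Lemma safe kk : bad kk -> forall T j, j \notin F -> sv_sent (sigma T j) kk (~~ v) = false.
Proof.
have [Hv Hr [Sp [HSp1 HSp2]]] := dec_facts.
elim/ltn_ind: kk => kk IHk Hbad T.
elim: T => [|T IH] j Hj; first by rewrite Hex.1.
apply/negP => /(sv_step Hex Hj) [|[Hc|[Hpc Hk Hx Hsup]]].
- by rewrite IH.
- have : #|rcv_sval (sigma T.+1 j) kk (~~ v)| <= t.
    apply: leq_trans HF; apply: subset_leq_card; apply/subsetP => i Hi.
    case/(rcv_step Hex Hj): Hi => [Hi|[//|[Hi Hs]]].
    + case: (rcv_inv Hn HF Hex Hj Hi) => [//|[Hi' Hs]]; by rewrite IH in Hs.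
    + by rewrite IH in Hs.
  lia.
- set rho := rnd (sigma T j) in Hk Hpc Hx Hsup.
  have HL := LIG T Hj.
  move: Hbad; rewrite /bad Hk /= => /andP [Hrr /eqP Hcv].
  have Hr0 : 0 < rho by lia.
  have Hest := l4 HL Hpc Hr0.
  have [[S [HS1 HS2]] Hfl] := l10 HL Hpc Hr0 Hsup.
  rewrite Hcv in HS2 Hfl.
  case: (ltngtP r rho) => Hrr2; last first.
  + subst rho.
    have [j0 [Hj0a Hj0b Hj0c]] := inter_nf Hn HF HS1 HSp1.
    have Ha1 := subsetP HS2 j0 Hj0a.
    have Ha2 := subsetP HSp2 j0 Hj0b.
    case: (rcva_inv Hn HF Hex Hj Ha1) => [H|[_ A1]]; first by rewrite H in Hj0c.
    case: (rcva_inv Hn HF Hex Hp Ha2) => [H|[_ A2]]; first by rewrite H in Hj0c.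
    have [[_ _ _ _ g1] _] := G_grow Hn HF Hex Hj0c (leq_maxl T k0).
    have [[_ _ _ _ g2] _] := G_grow Hn HF Hex Hj0c (leq_maxr T k0).
    have := l8u (LIG (maxn T k0) Hj0c) r.
    by rewrite -Hrr2 in A1; move: (g1 _ _ A1) (g2 _ _ A2); case: (v) => -> ->.
  + by lia.
  + have Hb := P_bad Hrr2.
    have Hlt : P coin rho (~~ v) < kk by have := P_le coin (~~ v) Hr0; lia.
    have Hns := no_senders Hn HF Hex Hj (IHk _ Hlt Hb T).
    move: Hfl Hns; rewrite (l5 HL) /rho => /andP [_]; lia.
Qed.

Lemma safe_flag kk : bad kk -> forall T j, j \notin F -> sflag (sigma T j) kk (~~ v) = false.
Proof.
move=> Hb T j Hj; rewrite (l5 (LIG T Hj)).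
have := no_senders Hn HF Hex Hj (fun i Hi => safe Hb T Hi).
by case: (invoked _ _ _) => //=; case: leqP => //; lia.
Qed.

Lemma part3 q rho k : q \notin F -> r < rho -> in_round (sigma k q) rho ->
  exists kk, ptr (sigma k q) (~~ v) = Some kk /\
             forall k', sflag (sigma k' q) kk (~~ v) = false.
Proof.
move=> Hq Hlt [Hpc Hrnd]; exists (P coin rho (~~ v)); split.
- by rewrite -Hrnd; apply: (l2 (LIG k Hq)) => //; rewrite Hrnd; lia.
- by move=> k'; apply: safe_flag => //; apply: P_bad.
Qed.

Lemma part2 q rho k : q \notin F -> r <= rho -> dec (sigma k q) <> Some (~~ v, rho).
Proof.
have [Hv Hr _] := dec_facts.
move=> Hq Hle Hd; have [Hc Hr' [S [HS1 HS2]]] := l11 (LIG k Hq) Hd.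
case: (ltngtP r rho) => H; last 2 first.
- lia.
- by subst rho; move: Hc; rewrite -Hv; case: (v).
have [j [Hj _ HjF]] := inter_nf Hn HF HS1 HS1.
case: (rcva_inv Hn HF Hex Hq (subsetP HS2 j Hj)) => [H'|[_ A]]; first by rewrite H' in HjF.
have [_ _ Hfl] := l8 (LIG k HjF) A.
by rewrite (safe_flag (P_bad H)) in Hfl.
Qed.

End Safety.

Section Live.
Variables (n t : nat) (F : {set 'I_n}) (prop : 'I_n -> bool) (coin : nat -> bool)
  (sigma : nat -> gstate n) (lab : nat -> label n).
Hypothesis Hn : 3 * t < n.
Hypothesis HF : #|F| <= t.
Hypothesis Hex : execution t F prop coin sigma lab.
Hypothesis Hfair : fair t F prop coin sigma lab.

Let LIG T i (Hi : i \notin F) := G_LI Hn HF Hex T Hi.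
Let GG T T' i (Hi : i \notin F) (H : T <= T') := G_grow Hn HF Hex Hi H.

Definition enabled T i := exists g', gstep t F prop coin (sigma T) (Local i) g'.

Lemma en_of_lstep T i : i \notin F ->
  (exists ls', lstep t coin (prop i) (sigma T i) ls') -> enabled T i.
Proof.
move=> Hi [ls' Hs]; exists (gupd (sigma T) i ls'); split=> //; split.
- by rewrite /gupd eqxx.
- by move=> j /negbTE Hj; rewrite /gupd Hj.
Qed.

Lemma stage_mono T T' i : i \notin F -> T <= T' -> stage (sigma T i) <= stage (sigma T' i).
Proof. by move=> Hi H; case: (GG Hi H) => _ []. Qed.

Lemma prog i m : i \notin F -> (exists T, m <= stage (sigma T i)) ->
  (exists T1, forall T, T1 <= T -> stage (sigma T i) = m -> enabled T i) ->
  exists T, m < stage (sigma T i).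
Proof.
move=> Hi [T0 H0] [T1 H1].
case: (classic (exists T, m < stage (sigma T i))) => // Hno; exfalso.
have Heq : forall T, maxn T0 T1 <= T -> stage (sigma T i) = m.
  move=> T HT; apply/eqP; rewrite eqn_leq; apply/andP; split.
  - by rewrite leqNgt; apply/negP => H; apply: Hno; exists T.
  - apply: leq_trans H0 (stage_mono Hi _); apply: leq_trans HT; exact: leq_maxl.
have [k' [Hk' Hl]] := Hfair.2 i (maxn T0 T1) Hi
  (fun k' Hk' => H1 k' (leq_trans (leq_maxr _ _) Hk') (Heq k' Hk')).
have := Hex.2 k'; rewrite Hl => -[_ [Hs _]].
have := stage_lstep (HtnG Hn HF) (LIG k' Hi) Hs.
rewrite (Heq k' Hk') (Heq k'.+1 (leq_trans Hk' (leqnSn _))); lia.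
Qed.

Lemma stage_dec (ls : lstate n) vi m : LI t coin vi ls ->
  (stage ls = 0 -> pc ls = PInit) /\
  (stage ls = 3 * m + 1 -> pc ls = PStart /\ rnd ls = m) /\
  (stage ls = 3 * m + 2 -> pc ls = PWaitEst /\ rnd ls = m.+1) /\
  (stage ls = 3 * m + 3 -> pc ls = PWaitAux /\ rnd ls = m.+1).
Proof.
move=> HL; rewrite /stage; case Hpc: (pc ls).
all: have Hr : pc ls = PWaitEst \/ pc ls = PWaitAux -> 0 < rnd ls by apply: (l3 HL).
all: rewrite Hpc in Hr.
all: split; [|split; [|split]]; move=> H; try split; try done; try lia.
all: first [have := Hr (or_introl erefl) | have := Hr (or_intror erefl)]; lia.
Qed.

Lemma rcv_mono T T' i j k x : i \notin F -> T <= T' ->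
  j \in rcv_sval (sigma T i) k x -> j \in rcv_sval (sigma T' i) k x.
Proof. by move=> Hi H; case: (GG Hi H) => [[g _ _ _ _] _]; apply/subsetP. Qed.

Lemma rcva_mono T T' i j k x : i \notin F -> T <= T' ->
  j \in rcv_aux (sigma T i) k x -> j \in rcv_aux (sigma T' i) k x.
Proof. by move=> Hi H; case: (GG Hi H) => [[_ g _ _ _] _]; apply/subsetP. Qed.

Lemma inv_mono T T' i k x : i \notin F -> T <= T' ->
  invoked (sigma T i) k x -> invoked (sigma T' i) k x.
Proof. by move=> Hi H; case: (GG Hi H) => [[_ _ g _ _] _]; apply: g. Qed.

Lemma sv_mono T T' i k x : i \notin F -> T <= T' ->
  sv_sent (sigma T i) k x -> sv_sent (sigma T' i) k x.
Proof. by move=> Hi H; case: (GG Hi H) => [[_ _ _ g _] _]; apply: g. Qed.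

Lemma aux_mono T T' i k x : i \notin F -> T <= T' ->
  aux_sent (sigma T i) k x -> aux_sent (sigma T' i) k x.
Proof. by move=> Hi H; case: (GG Hi H) => [[_ _ _ _ g] _]; apply: g. Qed.

Lemma sf_mono T T' i k x : i \notin F -> T <= T' ->
  sflag (sigma T i) k x -> sflag (sigma T' i) k x.
Proof. by move=> Hi H; apply: sflag_grow (LIG T Hi) (LIG T' Hi) (GG Hi H). Qed.

Lemma amp K x :
  (exists T0 (A : {set 'I_n}), t < #|A| /\ forall j, j \in A -> j \notin F /\ sv_sent (sigma T0 j) K x) ->
  (forall q, q \notin F -> exists T, invoked (sigma T q) K x) ->
  forall q, q \notin F -> exists T, sflag (sigma T q) K x.
Proof.
move=> [T0 [A [HA HA2]]] Hinv.
have Hrecv : forall q, q \notin F -> exists T, forall j, j \in A -> j \in rcv_sval (sigma T q) K x.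
  move=> q Hq; apply: fin_ev; first by move=> j T T' _ H; apply: rcv_mono.
  move=> j Hj; case: (HA2 j Hj) => Hj1 Hj2.
  by have [k' Hk'] := Hfair.1 T0 j q (SVAL K x) Hj1 Hq Hj2; exists k'.
have Hsv : forall q, q \notin F -> exists T, sv_sent (sigma T q) K x.
  move=> q Hq; have [T1 H1] := Hrecv q Hq; have [T2 H2] := Hinv q Hq.
  exists (maxn T1 T2); apply: (l6 (LIG _ Hq)); first exact: (inv_mono Hq (leq_maxr _ _) H2).
  rewrite addn1; apply: leq_trans HA _; apply: subset_leq_card; apply/subsetP => j Hj.
  exact: (rcv_mono Hq (leq_maxl _ _) (H1 j Hj)).
have [T3 H3] : exists T, forall j, j \in ~: F -> sv_sent (sigma T j) K x.
  apply: fin_ev; first by move=> j T T'; rewrite in_setC; apply: sv_mono.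
  by move=> j; rewrite in_setC; apply: Hsv.
move=> q Hq.
have [T4 H4] : exists T, forall j, j \in ~: F -> j \in rcv_sval (sigma T q) K x.
  apply: fin_ev; first by move=> j T T' _ H; apply: rcv_mono.
  move=> j Hj; have := H3 j Hj; rewrite in_setC in Hj => Hs.
  by have [k' Hk'] := Hfair.1 T3 j q (SVAL K x) Hj Hq Hs; exists k'.
have [T2 H2] := Hinv q Hq.
exists (maxn T4 T2); rewrite (l5 (LIG _ Hq)) (inv_mono Hq (leq_maxr _ _) H2) /=.
have := card_NF Hn HF.
have : #|~: F| <= #|rcv_sval (sigma (maxn T4 T2) q) K x|.
  apply: subset_leq_card; apply/subsetP => j Hj.
  exact: (rcv_mono Hq (leq_maxl _ _) (H4 j Hj)).
move=> H5 H6; apply: leq_trans H5; apply: leq_trans H6; lia.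
Qed.

Lemma en_simple (ls : lstate n) vi : pc ls = PInit \/ pc ls = PStart ->
  exists ls', lstep t coin vi ls ls'.
Proof. by case=> Hpc; rewrite /lstep Hpc; eexists; reflexivity. Qed.

Lemma all_at (m : nat) : (forall i, i \notin F -> exists T, m <= stage (sigma T i)) ->
  exists T, forall i, i \notin F -> m <= stage (sigma T i).
Proof.
move=> H; have [T HT] : exists T, forall i, i \in ~: F -> m <= stage (sigma T i).
  apply: fin_ev.
  - move=> i T T'; rewrite in_setC => Hi HT H'; apply: leq_trans H' _; exact: stage_mono.
  - by move=> i; rewrite in_setC; apply: H.
by exists T => i Hi; apply: HT; rewrite in_setC.
Qed.

Lemma live0 i : i \notin F -> exists T, 1 <= stage (sigma T i).
Proof.
move=> Hi; apply: (prog (m := 0) Hi); first by exists 0.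
exists 0 => T _ Hs; apply: en_of_lstep => //; apply: en_simple; left.
by have [H _] := stage_dec 0 (LIG T Hi); apply: H.
Qed.

Lemma step_a m : (forall i, i \notin F -> exists T, 3*m+1 <= stage (sigma T i)) ->
  forall i, i \notin F -> exists T, 3*m+2 <= stage (sigma T i).
Proof.
move=> H i Hi.
have Hen : exists T1, forall T, T1 <= T -> stage (sigma T i) = 3*m+1 -> enabled T i.
  exists 0 => T _ Hs; apply: en_of_lstep => //; apply: en_simple; right.
  by have [_ [H' _]] := stage_dec m (LIG T Hi); case: (H' Hs).
have [T HT] := prog Hi (H i Hi) Hen.
by exists T; rewrite -addn1 -addnA in HT.
Qed.

Lemma flag_sender T j k x : j \notin F -> sflag (sigma T j) k x ->
  exists T0 (A : {set 'I_n}), t < #|A| /\ forall j, j \in A -> j \notin F /\ sv_sent (sigma T0 j) k x.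
Proof.
move=> Hj; rewrite (l5 (LIG T Hj)) => /andP [_ Hc].
by exists T; apply: (senders Hn HF Hex Hj Hc).
Qed.

Lemma nf_big : t < #|~: F|.
Proof. have := card_NF Hn HF; lia. Qed.

Lemma step_b m : (forall i, i \notin F -> exists T, 3*m+2 <= stage (sigma T i)) ->
  forall i, i \notin F -> exists T, 3*m+3 <= stage (sigma T i).
Proof.
move=> H.
have [T0 H0] := all_at H.
have Hinv : forall x q, q \notin F -> exists T, invoked (sigma T q) (P coin m.+1 x) x.
  move=> x q Hq; exists T0; apply: (l7 (LIG T0 Hq)) => //.
  by have := H0 q Hq; lia.
have [x Hx] : exists x, forall q, q \notin F -> exists T, sflag (sigma T q) (P coin m.+1 x) x.
  case: (posnP m) => Hm.
  - subst m.
    have Hl13 : forall j, j \notin F -> sv_sent (sigma T0 j) 1 (prop j).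
      by move=> j Hj; apply: (l13 (LIG T0 Hj)); have := H0 j Hj; lia.
    have Hid : #|~: F :&: [set j | prop j]| + #|~: F :\: [set j | prop j]| = #|~: F|
      := cardsID _ _.
    have Hbig : n - t <= #|~: F| := card_NF Hn HF.
    case: (ltnP t #|~: F :&: [set j | prop j]|) => Hb.
    + exists true; apply: amp (Hinv true); exists T0, (~: F :&: [set j | prop j]); split=> //.
      move=> j; rewrite !inE => /andP [Hj Hp]; split=> //.
      by have := Hl13 j Hj; rewrite Hp.
    + exists false; apply: amp (Hinv false); exists T0, (~: F :\: [set j | prop j]); split; first lia.
      move=> j; rewrite !inE => /andP [Hp Hj]; split=> //.
      by have := Hl13 j Hj; rewrite (negbTE Hp).
  - case: (boolP [exists j in ~: F, sflag (sigma T0 j) (P coin m (coin m)) (coin m)]).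
    + case/existsP => j /andP [Hj Hf]; rewrite in_setC in Hj.
      exists (coin m); apply: amp (Hinv _).
      have -> : P coin m.+1 (coin m) = P coin m (coin m).
        by rewrite /= Hm /=; case: (coin m).
      exact: flag_sender Hj Hf.
    + move=> Hno; exists (~~ coin m); apply: amp (Hinv _).
      have -> : P coin m.+1 (~~ coin m) = m.+1 by rewrite /= Hm eqxx.
      exists T0, (~: F); split; first exact: nf_big.
      move=> j; rewrite in_setC => Hj; split=> //.
      have := l12 (LIG T0 Hj) Hm ltac:(by have := H0 j Hj; lia).
      case/orP=> // Hf; exfalso; move/negP: Hno; apply; apply/existsP; exists j.
      by rewrite in_setC Hj.
move=> i Hi.
have [T1 H1] := Hx i Hi.
have Hen : exists T1, forall T, T1 <= T -> stage (sigma T i) = 3*m+2 -> enabled T i.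
  exists T1 => T HT Hs; apply: en_of_lstep => //.
  have [_ [_ [H' _]]] := stage_dec m (LIG T Hi); case: (H' Hs) => Hpc Hr.
  rewrite /lstep Hpc; eexists; split; last reflexivity.
  have Hpf : ptrflag (sigma T i) x by rewrite /ptrflag (l2 (LIG T Hi)) ?Hpc ?Hr // (sf_mono Hi HT H1).
  by case: x Hpf {H1 Hx}=> ->; rewrite ?orbT.
have [T HT] := prog Hi (ex_intro _ T0 (H0 i Hi)) Hen.
by exists T; rewrite -addn1 -addnA in HT.
Qed.

Lemma step_c m : (forall i, i \notin F -> exists T, 3*m+3 <= stage (sigma T i)) ->
  forall i, i \notin F -> exists T, 3*m+4 <= stage (sigma T i).
Proof.
move=> H.
have [T0 H0] := all_at H.
pose wf j := aux_sent (sigma T0 j) m.+1 true.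
have Haux : forall j, j \notin F -> aux_sent (sigma T0 j) m.+1 (wf j).
  move=> j Hj; rewrite /wf.
  have := l14 (LIG T0 Hj) (ltn0Sn m) ltac:(by have := H0 j Hj; lia).
  by case E: (aux_sent (sigma T0 j) m.+1 true) => /=; rewrite ?E ?orbF.
have Hinv : forall x q, q \notin F -> exists T, invoked (sigma T q) (P coin m.+1 x) x.
  move=> x q Hq; exists T0; apply: (l7 (LIG T0 Hq)) => //.
  by have := H0 q Hq; lia.
move=> i Hi.
have [T1 H1] : exists T, forall j, j \in ~: F ->
   j \in rcv_aux (sigma T i) m.+1 (wf j) /\ sflag (sigma T i) (P coin m.+1 (wf j)) (wf j).
  apply: fin_ev.
  - move=> j T T' _ HT [a b]; split; [exact: rcva_mono a | exact: sf_mono b].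
  - move=> j; rewrite in_setC => Hj.
    have [Ta Ha] := Hfair.1 T0 j i (AUX m.+1 (wf j)) Hj Hi (Haux j Hj).
    have [_ _ Hfl] := l8 (LIG T0 Hj) (Haux j Hj).
    have [Tb Hb] := amp (flag_sender Hj Hfl) (Hinv _) Hi.
    exists (maxn Ta Tb); split.
    + exact: (rcva_mono Hi (leq_maxl _ _) Ha).
    + exact: (sf_mono Hi (leq_maxr _ _) Hb).
have [S [HS1 HS2]] := sub_card_ex Hn HF (card_NF Hn HF).
have Hen : exists T1, forall T, T1 <= T -> stage (sigma T i) = 3*m+3 -> enabled T i.
  exists T1 => T HT Hs; apply: en_of_lstep => //.
  have [_ [_ [_ H']]] := stage_dec m (LIG T Hi); case: (H' Hs) => Hpc Hr.
  apply: (@lstep_aux_ex n t coin (prop i) (sigma T i) S wf) => // j Hj.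
  have [a b] := H1 j (subsetP HS1 j Hj); split.
  - by rewrite Hr; exact: rcva_mono a.
  - by rewrite /ptrflag (l2 (LIG T Hi)) ?Hpc ?Hr //; exact: sf_mono b.
have [T HT] := prog Hi (ex_intro _ T0 (H0 i Hi)) Hen.
by exists T; rewrite -addn1 -addnA in HT.
Qed.

Lemma live rho i : i \notin F -> exists T, 3*rho+1 <= stage (sigma T i).
Proof.
elim: rho i => [|rho IH] i Hi; first by have := live0 Hi; rewrite muln0.
have [T HT] := step_c (step_b (step_a IH)) Hi.
by exists T; move: HT; rewrite mulnS; lia.
Qed.

End Live.

Section Part1.
Variables (n t : nat) (F : {set 'I_n}) (prop : 'I_n -> bool) (coin : nat -> bool)
  (sigma : nat -> gstate n) (lab : nat -> label n).
Hypothesis Hn : 3 * t < n.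
Hypothesis HF : #|F| <= t.
Hypothesis Hex : execution t F prop coin sigma lab.
Hypothesis Hfair : fair t F prop coin sigma lab.
Variables (p : 'I_n) (v : bool) (r k0 : nat).
Hypothesis Hp : p \notin F.
Hypothesis Hdec : dec (sigma k0 p) = Some (v, r).

Let LIG T i (Hi : i \notin F) := G_LI Hn HF Hex T Hi.

Lemma senders_v d : exists T0 (A : {set 'I_n}), t < #|A| /\
  forall j, j \in A -> j \notin F /\ sv_sent (sigma T0 j) (P coin (r + d) v) v.
Proof.
have [Hv Hr [Sp [HSp1 HSp2]]] := dec_facts Hn HF Hex Hp Hdec.
elim: d => [|d IH].
- have [j [Hj _ HjF]] := inter_nf Hn HF HSp1 HSp1.
  case: (rcva_inv Hn HF Hex Hp (subsetP HSp2 j Hj)) => [H'|[_ A]]; first by rewrite H' in HjF.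
  have [_ _ Hfl] := l8 (LIG k0 HjF) A.
  rewrite addn0; exact: (flag_sender Hn HF Hex HjF Hfl).
- rewrite addnS /=.
  case: ifP => [/andP [_ /eqP Hc]|_]; last exact: IH.
  have Hlt : r < r + d.
    case: (posnP d) => [Hd|]; last lia.
    by move: Hc; rewrite Hd addn0 -Hv; case: (v).
  have [T0 H0] := all_at Hn HF Hex (fun i Hi => live Hn HF Hex Hfair (r + d).+1 Hi).
  exists T0, (~: F); split; first exact: (nf_big Hn HF).
  move=> j; rewrite in_setC => Hj; split=> //.
  have := l12 (LIG T0 Hj) (ltn_addr d Hr) ltac:(by have := H0 j Hj; lia).
  have Hcv : coin (r + d) = ~~ v by rewrite Hc negbK.
  rewrite Hcv (safe_flag Hn HF Hex Hp Hdec (P_bad Hn HF Hex Hp Hdec Hlt)) // orbF.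
  by rewrite negbK.
Qed.

Lemma part1 q rho k : q \notin F -> r <= rho -> in_round (sigma k q) rho ->
  exists kk, ptr (sigma k q) v = Some kk /\
             exists k', k <= k' /\ sflag (sigma k' q) kk v.
Proof.
have [Hv Hr _] := dec_facts Hn HF Hex Hp Hdec.
move=> Hq Hle [Hpc Hrnd]; exists (P coin rho v); split.
  by rewrite -Hrnd; apply: (l2 (LIG k Hq)) => //; rewrite Hrnd; lia.
have Hsnd : exists T0 (A : {set 'I_n}), t < #|A| /\
    forall j, j \in A -> j \notin F /\ sv_sent (sigma T0 j) (P coin rho v) v.
  by rewrite -(subnKC Hle); apply: senders_v.
have Hinv : forall q', q' \notin F -> exists T, invoked (sigma T q') (P coin rho v) v.
  move=> q' Hq'; have [T HT] := live Hn HF Hex Hfair rho Hq'.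
  by exists T; apply: (l7 (LIG T Hq')); lia.
have [T HT] := amp Hn HF Hex Hfair Hsnd Hinv Hq.
exists (maxn k T); split; first exact: leq_maxl.
exact: (sf_mono Hn HF Hex Hq (leq_maxr _ _) HT).
Qed.

End Part1.

Theorem lemma13 (n t : nat) (F : {set 'I_n}) (prop : 'I_n -> bool)
  (coin : nat -> bool) (sigma : nat -> gstate n) (lab : nat -> label n) :
  3 * t < n -> #|F| <= t ->
  execution t F prop coin sigma lab -> fair t F prop coin sigma lab ->
  forall (p : 'I_n) (v : bool) (r k0 : nat),
    p \notin F -> dec (sigma k0 p) = Some (v, r) ->
    (forall (q : 'I_n) (rho k : nat), q \notin F -> r <= rho ->
       in_round (sigma k q) rho ->
       exists kk, ptr (sigma k q) v = Some kk /\
                  exists k', k <= k' /\ sflag (sigma k' q) kk v)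
    /\ (forall (q : 'I_n) (rho k : nat), q \notin F -> r <= rho ->
          dec (sigma k q) <> Some (~~ v, rho))
    /\ (forall (q : 'I_n) (rho k : nat), q \notin F -> r < rho ->
          in_round (sigma k q) rho ->
          exists kk, ptr (sigma k q) (~~ v) = Some kk /\
                     forall k', sflag (sigma k' q) kk (~~ v) = false).
Proof.
move=> Hn HF Hex Hfair p v r k0 Hp Hdec; split; last split.
- by move=> q rho k; apply: (part1 Hn HF Hex Hfair Hp Hdec).
- by move=> q rho k; apply: (part2 Hn HF Hex Hp Hdec).
- by move=> q rho k; apply: (part3 Hn HF Hex Hp Hdec).
Qed.
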